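(* Let $(f,g),(f',g')\in\Theta$ both be in general position, with representation dimension $m$ and $k\ge m+1$ labels. Let $C=\sqrt{2m/(k-1)}$, and let $\sigma_{\min}$ and $\sigma_{\max}$ be respectively the smallest and the largest singular value among all matrices $\tilde L_{\mathcal J}$ of the model $(f,g)$ (over all pivots $\tilde y$ and all $m$-subsets $\mathcal J\subseteq\mathcal Y\setminus\{\tilde y\}$). Then $$C\,\frac{d_{\mathrm{logit}}(p_{f,g},p_{f',g'})}{\sigma_{\max}}\ \le\ d_{\mathrm{rep}}((f,g),(f',g'))\ \le\ C\,\frac{d_{\mathrm{logit}}(p_{f,g},p_{f',g'})}{\sigma_{\min}}.$$
   Context: Model class $\Theta$: pairs $(f,g)$, $f:\mathcal X\to\mathbb R^m$, $g:\mathcal Y\to\mathbb R^m$, $\mathcal Y$ a finite set of $k$ labels, $\sum_y g(y)=0$, inducing $p_{f,g}(y\mid x)\propto\exp(f(x)^\top g(y))$; $p_x$ is the data distribution. Logits $u(x)=(f(x)^\top g(y))_{y\in\mathcal Y}$, $d_{\mathrm{logit}}^2=\mathbb E_{x\sim p_x}\|u(x)-u'(x)\|_2^2$. For a pivot $\tilde y\in\mathcal Y$ set $\tilde g(y)=g(y)-g(\tilde y)$, and for $\mathcal J=\{y_1,\dots,y_m\}\subseteq\mathcal Y\setminus\{\tilde y\}$ let $\tilde L_{\mathcal J}=(\tilde g(y_1)\ \cdots\ \tilde g(y_m))\in\mathbb R^{m\times m}$ (similarly $\tilde L'_{\mathcal J}$ from $g'$). A model is in general position if $\tilde L_{\mathcal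 J}$ is invertible for every pivot $\tilde y$ and every $m$-subset $\mathcal J\subseteq\mathcal Y\setminus\{\tilde y\}$, and $\mathrm{span}\{f(x):x\in\mathrm{supp}(p_x)\}=\mathbb R^m$. Put $\tilde A_{\mathcal J}=\tilde L_{\mathcal J}^{-\top}\tilde L_{\mathcal J}'^{\top}$ and $J=\binom{k-1}{m}$. The linear identifiability dissimilarity is $$d_{\mathrm{rep}}^2((f,g),(f',g'))=\frac{1}{kJ}\sum_{\tilde y\in\mathcal Y}\ \sum_{\mathcal J\subseteq\mathcal Y\setminus\{\tilde y\},\,|\mathcal J|=m}\mathbb E_{x\sim p_x}\|f(x)-\tilde A_{\mathcal J}f'(x)\|_2^2.$$ *)

(* Defs.v *)
From HB Require Import structures.
From mathcomp Require Import all_boot all_order all_algebra.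
From mathcomp Require Import all_classical all_reals all_analysis.
Set Implicit Arguments. Unset Strict Implicit. Unset Printing Implicit Defensive.
Import Order.TTheory GRing.Theory Num.Theory.
Local Open Scope ring_scope.

Section Defs.
Context {R : realType} {m k : nat}.

Definition dotv (a b : 'cV[R]_m) : R := \sum_(i < m) a i 0 * b i 0.
Definition sqnorm {n : nat} (a : 'cV[R]_n) : R := \sum_(i < n) a i 0 ^+ 2.

Definition logits (fx : 'cV[R]_m) (g : 'I_k -> 'cV[R]_m) : 'cV[R]_k :=
  \col_(y < k) dotv fx (g y).

Definition gtilde (g : 'I_k -> 'cV[R]_m) (yt : 'I_k) (y : 'I_k) : 'cV[R]_m :=
  g y - g yt.

(* tilde L_J : columns tilde g(y_1), ..., tilde g(y_m), J = {y_1 < ... < y_m} *)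
Definition Ltilde (g : 'I_k -> 'cV[R]_m) (yt : 'I_k) (J : {set 'I_k}) : 'M[R]_m :=
  \matrix_(i < m, j < m) gtilde g yt (nth yt (enum J) j) i 0.

Definition admissible (yt : 'I_k) (J : {set 'I_k}) : bool :=
  (#|J| == m) && (yt \notin J).

Definition Atilde (g g' : 'I_k -> 'cV[R]_m) (yt : 'I_k) (J : {set 'I_k}) : 'M[R]_m :=
  invmx (Ltilde g yt J)^T *m (Ltilde g' yt J)^T.

Definition singular_value (M : 'M[R]_m) (s : R) : Prop :=
  0 <= s /\ eigenvalue (M^T *m M) (s ^+ 2).
End Defs.

Definition esqrt {R : realType} (x : \bar R) : \bar R :=
  match x with
  | EFin r => EFin (Num.sqrt r)
  | EPInf => +oo%E
  | ENInf => 0%E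
  end.

Local Open Scope ereal_scope.

Definition general_position {R : realType} {d : measure_display}
  {X : measurableType d} {m k : nat} (P : probability X R)
  (f : X -> 'cV[R]_m) (g : 'I_k -> 'cV[R]_m) : Prop :=
  (forall (yt : 'I_k) (J : {set 'I_k}), admissible (m:=m) yt J ->
     Ltilde g yt J \in unitmx) /\
  (* span{ f(x) : x in supp p_x } = R^m : no nonzero v is orthogonal to
     f(x) for p_x-almost every x *)
  (forall v : 'cV[R]_m, {ae P, forall x, dotv v (f x) = 0%R} -> v = 0%R).

Definition d_logit2 {R : realType} {d : measure_display}
  {X : measurableType d} {m k : nat} (P : probability X R)
  (f f' : X -> 'cV[R]_m) (g g' : 'I_k -> 'cV[R]_m) : \bar R :=
  \int[P]_x (sqnorm (logits (f x) g - logits (f' x) g'))%:E.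

Definition d_rep2 {R : realType} {d : measure_display}
  {X : measurableType d} {m k : nat} (P : probability X R)
  (f f' : X -> 'cV[R]_m) (g g' : 'I_k -> 'cV[R]_m) : \bar R :=
  (((k * 'C(k.-1, m))%:R)^-1)%:E *
  \sum_(yt : 'I_k) \sum_(J : {set 'I_k} | admissible (m:=m) yt J)
     \int[P]_x (sqnorm (f x - Atilde g g' yt J *m f' x))%:E.

Definition d_logit {R : realType} {d : measure_display}
  {X : measurableType d} {m k : nat} (P : probability X R)
  (f f' : X -> 'cV[R]_m) (g g' : 'I_k -> 'cV[R]_m) : \bar R :=
  esqrt (d_logit2 P f f' g g').

Definition d_rep {R : realType} {d : measure_display}
  {X : measurableType d} {m k : nat} (P : probability X R)
  (f f' : X -> 'cV[R]_m) (g g' : 'I_k -> 'cV[R]_m) : \bar R :=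
  esqrt (d_rep2 P f f' g g').

(* Main.v *)
Require Import Defs.
From HB Require Import structures.
From mathcomp Require Import all_boot all_order all_algebra.
From mathcomp Require Import all_classical all_reals all_analysis.
From mathcomp Require Import ring lra.
From mathcomp Require Import measurable_realfun.
Import Order.TTheory GRing.Theory Num.Theory.
Local Open Scope ring_scope.


Section LA.
Variable R : realType.
Variable n : nat.
Implicit Types (S T Q : 'M[R]_n) (x y : 'cV[R]_n).

Definition bf S x y : R := (x^T *m S *m y) 0 0.
Definition nrm2 x : R := (x^T *m x) 0 0.
Definition NN Q : R := \sum_i \sum_j `|Q i j|.

Lemma bfE S x y : bf S x y = \sum_i \sum_j x i 0 * S i j * y j 0.
Proof.
rewrite /bf mxE; under eq_bigr do rewrite mxE big_distrl /=.
rewrite exchange_big /=; apply: eq_bigr => i _; apply: eq_bigr => j _.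
by rewrite !mxE.
Qed.

Lemma nrm2E x : nrm2 x = \sum_i x i 0 ^+ 2.
Proof. by rewrite /nrm2 mxE; apply: eq_bigr => i _; rewrite !mxE expr2. Qed.

Lemma nrm2_ge0 x : 0 <= nrm2 x.
Proof. by rewrite nrm2E; apply: sumr_ge0 => i _; rewrite sqr_ge0. Qed.

Lemma coord_le x i : x i 0 ^+ 2 <= nrm2 x.
Proof.
rewrite nrm2E (bigD1 i) //= lerDl sumr_ge0 // => j _; exact: sqr_ge0.
Qed.

Lemma nrm2_eq0 x : nrm2 x = 0 -> x = 0.
Proof.
move=> h; apply/matrixP => i j; rewrite (ord1 j) mxE.
have := coord_le x i; rewrite h => /(le_trans (sqr_ge0 _)) _.
have := coord_le x i; rewrite h; rewrite -[_ <= 0]/(_ <= 0) => H.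
by apply/eqP; rewrite -sqrf_eq0 eq_le H sqr_ge0.
Qed.

Lemma NN_ge0 Q : 0 <= NN Q.
Proof. by apply: sumr_ge0 => i _; apply: sumr_ge0 => j _. Qed.

Lemma bf_bound Q y : `|bf Q y y| <= NN Q * nrm2 y.
Proof.
rewrite bfE /NN big_distrl /=; apply: (le_trans (ler_norm_sum _ _ _)).
apply: ler_sum => i _; rewrite big_distrl /=.
apply: (le_trans (ler_norm_sum _ _ _)); apply: ler_sum => j _.
rewrite (_ : y i 0 * Q i j * y j 0 = Q i j * (y i 0 * y j 0)); last by ring.
rewrite normrM ler_wpM2l //.
have hi := coord_le y i; have hj := coord_le y j.
have : (y i 0 * y j 0) * 2 <= y i 0 ^+ 2 + y j 0 ^+ 2.
  by have := sqr_ge0 (y i 0 - y j 0); rewrite -subr_ge0; lra.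
have : (- (y i 0 * y j 0)) * 2 <= y i 0 ^+ 2 + y j 0 ^+ 2.
  by have := sqr_ge0 (y i 0 + y j 0); rewrite -subr_ge0; lra.
case: (lerP 0 (y i 0 * y j 0)) => h.
  by rewrite ger0_norm //; lra.
by rewrite ltr0_norm //; lra.
Qed.

Lemma bf_sym S x y : S^T = S -> bf S x y = bf S y x.
Proof.
move=> sS; rewrite !bfE exchange_big /=; apply: eq_bigr => i _; apply: eq_bigr => j _.
have e : S j i = S i j by rewrite -[in LHS]sS mxE.
have e' : S i j = S j i by rewrite -[in LHS]sS mxE.
rewrite ?e ?e'; try ring.

Qed.

Lemma bf_expand S x y t : bf S (x + t *: y) (x + t *: y) =
  bf S x x + t * (bf S x y + bf S y x) + t ^+ 2 * bf S y y.
Proof.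
rewrite !bfE !mulrDr !big_distrr /= -!big_split /=; apply: eq_bigr => i _.
rewrite !big_distrr -!big_split /=; apply: eq_bigr => j _; rewrite !mxE; ring.
Qed.

Lemma quad_disc (a b c : R) : 0 <= c -> (forall t, 0 <= a + t * (2 * b) + t ^+ 2 * c) ->
  b ^+ 2 <= a * c.
Proof.
move=> c0 h; case: (ltrP 0 c) => c0'.
  have := h (- b / c); set t := - b / c => H.
  have ht : t * c = - b by rewrite /t mulrVK // ?unitfE ?gt_eqF //.
  have : 0 <= (a + t * (2 * b) + t ^+ 2 * c) * c by rewrite mulr_ge0 // ltW.
  have -> : (a + t * (2 * b) + t ^+ 2 * c) * c = a * c + 2 * b * (t * c) + (t * c) ^+ 2.
    by ring.
  rewrite ht; lra.
have c00 : c = 0 by apply/eqP; rewrite eq_le c0' c0.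
case: (eqVneq b 0) => [->|b0]; first by rewrite c00 expr0n /= mulr0.
have := h (- (a + 1) / (2 * b)); rewrite c00 mulr0 addr0.
have -> : - (a + 1) / (2 * b) * (2 * b) = - (a + 1).
  by rewrite mulrVK // unitfE mulf_neq0 // ?pnatr_eq0.
lra.
Qed.

Lemma bf_CS S x y : S^T = S -> (forall z, 0 <= bf S z z) ->
  bf S x y ^+ 2 <= bf S x x * bf S y y.
Proof.
move=> sS psd; apply: quad_disc => // t.
have := psd (x + t *: y); rewrite bf_expand (bf_sym _ y) //.
by rewrite (_ : t * (bf S x y + bf S x y) = t * (2 * bf S x y)) //; ring.
Qed.

Lemma nrm2_mul (A : 'M[R]_n) y : nrm2 (A *m y) = bf (A^T *m A) y y.
Proof. by rewrite /nrm2 /bf trmx_mul !mulmxA. Qed.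

Lemma bf_Sx S x : S^T = S -> bf S x (S *m x) = nrm2 (S *m x).
Proof. by move=> sS; rewrite /nrm2 /bf trmx_mul sS !mulmxA. Qed.

Lemma coercive S : S^T = S -> (forall z, 0 <= bf S z z) -> S \in unitmx ->
  exists2 e, 0 < e & forall x, e * nrm2 x <= bf S x x.
Proof.
move=> sS psd uS.
set N := NN S; set N1 := NN ((invmx S)^T *m invmx S).
have N0 : 0 <= N := NN_ge0 _; have N10 : 0 <= N1 := NN_ge0 _.
exists (N1 * N + 1)^-1; first by rewrite invr_gt0; nra.
move=> x; set q := bf S x x; set u := nrm2 (S *m x).
have q0 : 0 <= q := psd x; have u0 : 0 <= u := nrm2_ge0 _.
have h1 : u ^+ 2 <= q * (N * u).
  rewrite {1}/u -bf_Sx //; apply: (le_trans (@bf_CS S x (S *m x) sS psd)); rewrite -/q ler_wpM2l //.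
  exact: (le_trans (ler_norm _) (bf_bound _ _)).
have h2 : u <= N * q.
  case: (ltrP 0 u) => u0'; last first.
    have -> : u = 0 by apply/eqP; rewrite eq_le u0 u0'.
    by rewrite mulr_ge0.
  by rewrite -(ler_pM2r u0') -expr2 (le_trans h1) // mulrCA mulrA.
have h3 : nrm2 x <= N1 * u.
  have -> : x = invmx S *m (S *m x) by rewrite mulKmx.
  by rewrite nrm2_mul; apply: (le_trans (ler_norm _) (bf_bound _ _)).
rewrite mulrC ler_pdivrMr; last by nra.
nra.
Qed.

Hypothesis n0 : (0 < n)%N.

Definition x1 : 'cV[R]_n := const_mx 1.
Lemma x1_neq0 : x1 != 0.
Proof.
apply/eqP => /matrixP /(_ (Ordinal n0) 0); rewrite !mxE => /eqP; by rewrite oner_eq0.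
Qed.

Lemma nrm2_gt0 x : x != 0 -> 0 < nrm2 x.
Proof.
move=> nx; rewrite lt_neqAle nrm2_ge0 andbT; apply/eqP => h.
by move: nx; rewrite (nrm2_eq0 _ (esym h)) eqxx.
Qed.

Lemma bf0 S : bf S 0 0 = 0.
Proof. by rewrite bfE big1 // => i _; rewrite big1 // => j _; rewrite !mxE !mul0r. Qed.

Lemma nrm20 : nrm2 0 = 0.
Proof. by rewrite nrm2E big1 // => i _; rewrite mxE expr0n. Qed.

Definition Ray S : set R := [set r | exists2 x, x != 0 & r = bf S x x / nrm2 x].

Lemma Ray_lbound S : has_lbound (Ray S).
Proof.
exists (- NN S) => r [x nx ->].
have p := nrm2_gt0 _ nx; rewrite ler_pdivlMr //.
have := bf_bound S x; rewrite ler_norml => /andP[h _]; by rewrite mulNr.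
Qed.

Lemma Ray_ne S : nonempty (Ray S).
Proof. by exists (bf S x1 x1 / nrm2 x1); exists x1 => //; exact: x1_neq0. Qed.

Lemma ray_lb S x : inf (Ray S) * nrm2 x <= bf S x x.
Proof.
case: (eqVneq x 0) => [->|nx]; first by rewrite bf0 nrm20 mulr0.
have p := nrm2_gt0 _ nx; rewrite -ler_pdivlMr //.
apply: (ge_inf (Ray_lbound S)); by exists x.
Qed.

Lemma ray_ge S b : (forall x, b * nrm2 x <= bf S x x) -> b <= inf (Ray S).
Proof.
move=> h; apply: lb_le_inf; first exact: Ray_ne.
move=> r [x nx ->]; have p := nrm2_gt0 _ nx; by rewrite ler_pdivlMr.
Qed.

Lemma bfB S a x : bf (S - a%:M) x x = bf S x x - a * nrm2 x.
Proof.
by rewrite /bf /nrm2 mulmxBr mulmxBl mul_mx_scalar -scalemxAl !mxE.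
Qed.

Lemma ray_sing S : S^T = S -> (S - (inf (Ray S))%:M) \notin unitmx.
Proof.
move=> sS; apply/negP => uT; set mu := inf (Ray S).
have sT : (S - mu%:M)^T = S - mu%:M by rewrite linearB /= tr_scalar_mx sS.
have psd : forall z, 0 <= bf (S - mu%:M) z z.
  by move=> z; rewrite bfB subr_ge0 ray_lb.
have [e e0 he] := coercive _ sT psd uT.
have : mu + e <= mu.
  by apply: ray_ge => x; have := he x; rewrite bfB; lra.
lra.
Qed.

Lemma sing_eig (M : 'M[R]_n) a : (M - a%:M) \notin unitmx ->
  exists2 v : 'rV_n, v *m M = a *: v & v != 0.
Proof.
by move=> h; apply/eigenvalueP; rewrite /eigenvalue /eigenspace kermx_eq0 row_free_unit.
Qed.

Lemma bfN S x y : bf (- S) x y = - bf S x y.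
Proof. by rewrite /bf mulmxN mulNmx mxE. Qed.

Lemma eig_transfer (L : 'M[R]_n) mu (v : 'rV_n) : L \in unitmx ->
  v *m (L *m L^T) = mu *: v -> v != 0 -> eigenvalue (L^T *m L) mu.
Proof.
move=> uL hv nv; apply/eigenvalueP; exists (v *m L).
  by rewrite mulmxA -(mulmxA v) hv -scalemxAl.
apply/eqP => h; move/eqP: nv; apply.
by rewrite -(mulmxK uL v) h mul0mx.
Qed.

Lemma SsymL (L : 'M[R]_n) : (L *m L^T)^T = L *m L^T.
Proof. by rewrite trmx_mul trmxK. Qed.

Lemma SpsdL (L : 'M[R]_n) z : 0 <= bf (L *m L^T) z z.
Proof.
by have := nrm2_mul L^T z; rewrite trmxK => <-; exact: nrm2_ge0.
Qed.

Lemma sv_lo (L : 'M[R]_n) lo : L \in unitmx -> 0 <= lo ->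
  (forall s, singular_value L s -> lo <= s) ->
  forall z, lo ^+ 2 * nrm2 z <= bf (L *m L^T) z z.
Proof.
move=> uL lo0 hlo z; set S := L *m L^T; set mu := inf (Ray S).
have mu0 : 0 <= mu by apply: ray_ge => x; rewrite mul0r; exact: SpsdL.
have [v hv nv] := sing_eig _ _ (ray_sing _ (SsymL L)).
have svm : singular_value L (Num.sqrt mu).
  split; first exact: sqrtr_ge0.
  by rewrite sqr_sqrtr //; exact: (eig_transfer _ _ _ uL hv nv).
have h := hlo _ svm; have hs := sqr_sqrtr mu0; have hs0 := sqrtr_ge0 mu.
have : lo ^+ 2 <= mu by nra.
move=> hm; apply: (le_trans _ (ray_lb _ z)); rewrite ler_wpM2r //; exact: nrm2_ge0.
Qed.

Lemma sv_hi (L : 'M[R]_n) hi : L \in unitmx ->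
  (forall s, singular_value L s -> s <= hi) ->
  forall z, bf (L *m L^T) z z <= hi ^+ 2 * nrm2 z.
Proof.
move=> uL hhi z; set S := L *m L^T; set mu := inf (Ray (- S)).
have sN : (- S)^T = - S by rewrite linearN /= SsymL.
have [v hv nv] := sing_eig _ _ (ray_sing _ sN).
have hv' : v *m S = (- mu) *: v.
  by apply: oppr_inj; rewrite -mulmxN hv scaleNr opprK.
have lbz y : bf S y y <= - mu * nrm2 y.
  by have := ray_lb (- S) y; rewrite bfN; lra.
have nu0 : 0 <= - mu.
  have := lbz x1; have := SpsdL L x1; have := nrm2_gt0 _ x1_neq0; nra.
have svm : singular_value L (Num.sqrt (- mu)).
  split; first exact: sqrtr_ge0.
  by rewrite sqr_sqrtr //; exact: (eig_transfer _ _ _ uL hv' nv).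
have h := hhi _ svm; have hs := sqr_sqrtr nu0; have hs0 := sqrtr_ge0 (- mu).
have : - mu <= hi ^+ 2 by nra.
move=> hm; apply: (le_trans (lbz z)); rewrite ler_wpM2r //; exact: nrm2_ge0.
Qed.
End LA.
Arguments bf {R n}.
Arguments nrm2 {R n}.
Arguments NN {R n}.
Arguments Ray {R n}.


Section Comb.
Variable R : realType.
Variables m k : nat.
Hypothesis m0 : (0 < m)%N.

Lemma sum_nth (yt : 'I_k) (J : {set 'I_k}) (F : 'I_k -> R) : #|J| = m ->
  \sum_(j < m) F (nth yt (enum J) j) = \sum_(y in J) F y.
Proof.
move=> hJ; have sz : size (enum J) = m by rewrite -hJ cardE.
rewrite -[in RHS]big_enum (big_nth yt) /= sz big_mkord.
by apply: eq_bigr.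
Qed.

Lemma count_adm (yt y : 'I_k) : y != yt ->
  #|[set J : {set 'I_k} | admissible (m:=m) yt J && (y \in J)]| = 'C(k.-2, m.-1).
Proof.
move=> nyt.
set B := [set~ yt] :\ y.
have cB : #|B| = k.-2.
  have := cardsD1 y [set~ yt]; rewrite cardsC1 card_ord !inE nyt /= add1n.
  by move=> ->.
rewrite -cB -cards_draws.
have -> : [set J : {set 'I_k} | admissible (m:=m) yt J && (y \in J)] =
   (fun A => y |: A) @: [set A : {set 'I_k} | A \subset B & #|A| == m.-1].
  apply/setP => J; rewrite inE /admissible; apply/idP/imsetP.
    case/andP => /andP[/eqP cJ ytJ] yJ; exists (J :\ y); last by rewrite finset.setD1K.
    rewrite inE; apply/andP; split.
      apply/fintype.subsetP => z; rewrite !inE => /andP[-> zJ] /=.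
      by apply: contraNneq ytJ => <-.
    by have := cardsD1 y J; rewrite yJ cJ add1n => ->.
  case=> A; rewrite inE => /andP[sAB /eqP cA] ->.
  have yA : y \notin A by apply/negP => /(fintype.subsetP sAB); rewrite !inE eqxx.
  rewrite cardsU1 yA cA add1n prednK // eqxx /= setU11 andbT.
  rewrite in_setU1 negb_or eq_sym nyt /=.
  by apply/negP => /(fintype.subsetP sAB); rewrite !inE eqxx andbF.
rewrite card_in_imset // => A1 A2; rewrite !inE => /andP[s1 _] /andP[s2 _] e.
have y1 : y \notin A1 by apply/negP => /(fintype.subsetP s1); rewrite !inE eqxx.
have y2 : y \notin A2 by apply/negP => /(fintype.subsetP s2); rewrite !inE eqxx.
by rewrite -(finset.setU1K y1) -(finset.setU1K y2) e.
Qed.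


Lemma sq_sum (v : 'I_k -> R) (yt : 'I_k) :
  \sum_y (v y - v yt) ^+ 2 =
  \sum_y v y ^+ 2 + (k%:R * v yt ^+ 2 - 2 * v yt * \sum_y v y).
Proof.
rewrite (eq_bigr (fun y => v y ^+ 2 + (v yt ^+ 2 - (2 * v yt) * v y))); last first.
  by move=> y _; ring.
rewrite big_split /= sumrB sumr_const card_ord -big_distrr /=.
by rewrite (mulr_natl (v yt ^+ 2) k).
Qed.

Lemma comb_id (v : 'I_k -> R) : \sum_y v y = 0 ->
  \sum_(yt : 'I_k) \sum_(J : {set 'I_k} | admissible (m:=m) yt J)
     \sum_(j < m) (v (nth yt (enum J) j) - v yt) ^+ 2
  = (2 * k%:R * 'C(k.-2, m.-1)%:R) * \sum_y v y ^+ 2.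
Proof.
move=> v0.
have step : forall yt : 'I_k,
  \sum_(J : {set 'I_k} | admissible (m:=m) yt J)
     \sum_(j < m) (v (nth yt (enum J) j) - v yt) ^+ 2
  = 'C(k.-2, m.-1)%:R * \sum_y (v y - v yt) ^+ 2.
  move=> yt.
  under eq_bigr => J /andP[/eqP cJ _] do rewrite (sum_nth yt J (fun y => (v y - v yt) ^+ 2) cJ).
  rewrite (exchange_big_dep xpredT) //= big_distrr /=; apply: eq_bigr => y _.
  rewrite (eq_bigl (fun J => J \in [set J : {set 'I_k} | admissible (m:=m) yt J && (y \in J)])); last first.
    by move=> J; rewrite inE.
  rewrite sumr_const; case: (eqVneq y yt) => [->|nyt].
    by rewrite subrr expr0n /= mulr0 mul0rn.
  by rewrite count_adm // mulr_natl.
rewrite (eq_bigr _ (fun yt _ => step yt)) -big_distrr /=.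
rewrite (eq_bigr _ (fun yt _ => sq_sum v yt)) big_split /= sumr_const card_ord.
rewrite v0.
have e : \sum_(i < k) (k%:R * v i ^+ 2 - 2 * v i * 0) = \sum_(i < k) k%:R * v i ^+ 2.
  by apply: eq_bigr => i _; rewrite mulr0 subr0.
rewrite e.
rewrite -big_distrr /= -mulr_natr; ring.
Qed.
End Comb.


Section ESqrt.
Variable R : realType.
Local Open Scope ereal_scope.

Lemma esqrt_le (a : R) (x y : \bar R) : (0 <= a)%R -> 0 <= x -> 0 <= y ->
  x <= (a ^+ 2)%:E * y -> esqrt x <= a%:E * esqrt y.
Proof.
move=> a0 x0 y0; case: y y0 => [r| |] //= r0.
  case: x x0 => [s| |] //= s0.
    rewrite -EFinM !lee_fin => hs.
    rewrite -(ger0_norm a0) -sqrtr_sqr -sqrtrM ?sqr_ge0 // ler_sqrt //.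
    by rewrite mulr_ge0 ?sqr_ge0.
case: (ltrP 0 a) => [a0'|a0'].
  by rewrite !gt0_muley ?lte_fin ?exprn_gt0 // => _; exact: leey.
have -> : a = 0%R by apply/eqP; rewrite eq_le a0 a0'.
rewrite expr0n /= mul0e => hx.
have -> : x = 0 by apply/eqP; rewrite eq_le hx x0.
by rewrite /= sqrtr0.
Qed.

Lemma esqrt_ge0 (x : \bar R) : 0 <= x -> 0 <= esqrt x.
Proof. by case: x => [s| |] //= _; rewrite lee_fin sqrtr_ge0. Qed.

Lemma esqrt_ge (a : R) (x y : \bar R) : (0 <= a)%R -> 0 <= x -> 0 <= y ->
  (a ^+ 2)%:E * y <= x -> a%:E * esqrt y <= esqrt x.
Proof.
move=> a0 x0 y0; case: y y0 => [r| |] //= r0.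
  case: x x0 => [s| |] //= s0.
    rewrite -!EFinM !lee_fin => hs.
    by rewrite -(ger0_norm a0) -sqrtr_sqr -sqrtrM ?sqr_ge0 // ler_sqrt.
  by move=> _; rewrite /= leey.
case: (ltrP 0 a) => [a0'|a0'].
  rewrite gt0_muley ?lte_fin ?exprn_gt0 // => hx.
  have -> : x = +oo by apply/eqP; rewrite eq_le leey hx.
  by rewrite gt0_muley ?lte_fin.
have -> : a = 0%R by apply/eqP; rewrite eq_le a0 a0'.
by rewrite mul0e => _; exact: esqrt_ge0.
Qed.
End ESqrt.

Section Meas.
Context d (X : measurableType d) (R : realType) (P : probability X R).

Lemma mf_sum (I : Type) (r : seq I) (Q : pred I) (h : I -> X -> R) :
  (forall i, measurable_fun setT (h i)) ->
  measurable_fun setT (fun x => \sum_(i <- r | Q i) h i x).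
Proof.
move=> mh; elim: r => [|a r ih].
  have -> : (fun x => \sum_(i <- [::] | Q i) h i x) = cst 0%R.
    by apply/funext => x; rewrite big_nil.
  exact: measurable_cst.
have -> : (fun x => \sum_(i <- a :: r | Q i) h i x) =
  (fun x => (if Q a then h a x else 0%R) + \sum_(i <- r | Q i) h i x).
  by apply/funext => x; rewrite big_cons; case: (Q a); rewrite ?add0r.
apply: measurable_funD => //; case: (Q a) => //; exact: measurable_cst.
Qed.

Local Open Scope ereal_scope.

Lemma int_sum (I : finType) (Q : pred I) (h : I -> X -> R) :
  (forall i, measurable_fun setT (h i)) -> (forall i x, (0 <= h i x)%R) ->
  \sum_(i | Q i) \int[P]_x (h i x)%:E = \int[P]_x (\sum_(i | Q i) h i x)%:E.
Proof.
move=> mh h0; rewrite big_mkcond /=.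
have -> : \int[P]_x (\sum_(i | Q i) h i x)%:E =
  \int[P]_x (\sum_(i <- index_enum I) (if Q i then (h i x)%:E else 0)).
  apply: eq_integral => x _; rewrite -sumEFin big_mkcond /=.
  by apply: eq_bigr => i _; case: (Q i).
rewrite ge0_integral_sum //.
- by apply: eq_bigr => i _; case: (Q i) => //; rewrite integral0.
- move=> i; case: (Q i); last exact: measurable_cst.
  exact/measurable_EFinP.
- by move=> i x _; case: (Q i); rewrite // lee_fin.
Qed.

Lemma int_bounds (H V : X -> R) (c K lo hi : R) :
  measurable_fun setT H -> measurable_fun setT V ->
  (forall x, 0 <= H x)%R -> (forall x, 0 <= V x)%R -> (0 <= c)%R -> (0 <= K)%R ->
  (0 < lo)%R -> (0 < hi)%R ->
  (forall x, lo ^+ 2 * H x <= K * V x)%R -> (forall x, K * V x <= hi ^+ 2 * H x)%R ->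
  ((c * K / hi ^+ 2)%:E * \int[P]_x (V x)%:E <= c%:E * \int[P]_x (H x)%:E) /\
  (c%:E * \int[P]_x (H x)%:E <= (c * K / lo ^+ 2)%:E * \int[P]_x (V x)%:E).
Proof.
move=> mH mV H0 V0 c0 K0 lo0 hi0 hlo hhi.
have mHE : measurable_fun setT (fun x => (H x)%:E) by exact/measurable_EFinP.
have mVE : measurable_fun setT (fun x => (V x)%:E) by exact/measurable_EFinP.
have hi2 : (0 < hi ^+ 2)%R by rewrite exprn_gt0.
have lo2 : (0 < lo ^+ 2)%R by rewrite exprn_gt0.
have eZ : forall t : R, (0 <= t)%R ->
    \int[P]_x (t * V x)%:E = t%:E * \int[P]_x (V x)%:E.
  move=> t t0; under eq_integral => x _ do rewrite EFinM.
  apply: ge0_integralZl_EFin => //; by move=> x _; rewrite lee_fin.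
have t1 : (0 <= K / hi ^+ 2)%R by rewrite divr_ge0 // ltW.
have t2 : (0 <= K / lo ^+ 2)%R by rewrite divr_ge0 // ltW.
split.
  rewrite -mulrA EFinM -muleA; apply: lee_wpmul2l; first by rewrite lee_fin.
  rewrite -eZ //; apply: ge0_le_integral => //.
  - by move=> x _; rewrite lee_fin mulr_ge0.
  - exact/measurable_EFinP/measurable_funM/mV/measurable_cst.
  - move=> x _; rewrite lee_fin.
    have e : (K / hi ^+ 2 * V x = (K * V x) / hi ^+ 2)%R by rewrite mulrAC.
    by rewrite e ler_pdivrMr // (mulrC (H x)) hhi.
rewrite -mulrA EFinM -muleA; apply: lee_wpmul2l; first by rewrite lee_fin.
rewrite -eZ //; apply: ge0_le_integral => //.
- by move=> x _; rewrite lee_fin.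
- exact/measurable_EFinP/measurable_funM/mV/measurable_cst.
- move=> x _; rewrite lee_fin.
  have e : (K / lo ^+ 2 * V x = (K * V x) / lo ^+ 2)%R by rewrite mulrAC.
  by rewrite e ler_pdivlMr // (mulrC (H x)) hlo.
Qed.
End Meas.

Section Point.
Variable R : realType.
Variables m k : nat.
Implicit Types (g : 'I_k -> 'cV[R]_m) (a : 'cV[R]_m).

Definition vl a a' g g' (y : 'I_k) : R := dotv a (g y) - dotv a' (g' y).

Lemma Lt_entry g yt J a j :
  ((Ltilde g yt J)^T *m a) j 0 = dotv a (g (nth yt (enum J) j)) - dotv a (g yt).
Proof.
rewrite mxE /dotv -sumrB; apply: eq_bigr => i _; rewrite mxE /Ltilde mxE /gtilde !mxE; ring.
Qed.

Lemma z_eq g g' yt J a a' : Ltilde g yt J \in unitmx ->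
  (Ltilde g yt J)^T *m (a - Atilde g g' yt J *m a') =
  (Ltilde g yt J)^T *m a - (Ltilde g' yt J)^T *m a'.
Proof.
move=> uL; rewrite mulmxBr /Atilde !mulmxA mulmxV ?unitmx_tr // mul1mx. done.
Qed.

Lemma point_sum g g' yt J a a' :
  sqnorm ((Ltilde g yt J)^T *m a - (Ltilde g' yt J)^T *m a') =
  \sum_(j < m) (vl a a' g g' (nth yt (enum J) j) - vl a a' g g' yt) ^+ 2.
Proof.
rewrite /sqnorm; apply: eq_bigr => j _; rewrite mxE Lt_entry mxE Lt_entry /vl; congr (_ ^+ 2); ring.
Qed.

Lemma sqnorm_nrm2 n (x : 'cV[R]_n) : sqnorm x = nrm2 x.
Proof. by rewrite nrm2E. Qed.

Lemma logit_sqnorm a a' g g' :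
  sqnorm (logits a g - logits a' g') = \sum_y vl a a' g g' y ^+ 2.
Proof. by rewrite /sqnorm; apply: eq_bigr => y _; rewrite !mxE. Qed.

Lemma sum_dot a g : \sum_y g y = 0 -> \sum_y dotv a (g y) = 0.
Proof.
move=> sg; rewrite /dotv exchange_big /= big1 // => i _.
rewrite -big_distrr /= (_ : \sum_y g y i 0 = 0) ?mulr0 //.
by rewrite -summxE sg mxE.
Qed.

Lemma sum_vl a a' g g' : \sum_y g y = 0 -> \sum_y g' y = 0 ->
  \sum_y vl a a' g g' y = 0.
Proof. by move=> sg sg'; rewrite /vl sumrB !sum_dot // subrr. Qed.

Lemma bfw g g' yt J a a' : Ltilde g yt J \in unitmx ->
  \sum_(j < m) (vl a a' g g' (nth yt (enum J) j) - vl a a' g g' yt) ^+ 2 =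
  bf (Ltilde g yt J *m (Ltilde g yt J)^T) (a - Atilde g g' yt J *m a')
     (a - Atilde g g' yt J *m a').
Proof.
move=> uL; rewrite -point_sum -z_eq // sqnorm_nrm2 nrm2_mul trmxK //.
Qed.
End Point.

Section MeasV.
Context d (X : measurableType d) (R : realType).

Lemma m_sqnorm n (F : X -> 'cV[R]_n) :
  (forall i, measurable_fun setT (fun x => F x i 0)) ->
  measurable_fun setT (fun x => sqnorm (F x)).
Proof.
move=> mF; rewrite /sqnorm.
apply: (@mf_sum _ _ _ _ _ _ (fun i x => F x i 0 ^+ 2)) => i; exact: measurable_funX.
Qed.

Lemma m_sub n (F G : X -> 'cV[R]_n) i :
  measurable_fun setT (fun x => F x i 0) -> measurable_fun setT (fun x => G x i 0) ->
  measurable_fun setT (fun x => (F x - G x) i 0).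
Proof.
move=> mF mG; have -> : (fun x => (F x - G x) i 0) = (fun x => F x i 0 - G x i 0).
  by apply/funext => x; rewrite !mxE.
exact: measurable_funB.
Qed.

Lemma m_mul n p (A : 'M[R]_(n, p)) (F : X -> 'cV[R]_p) i :
  (forall j, measurable_fun setT (fun x => F x j 0)) ->
  measurable_fun setT (fun x => (A *m F x) i 0).
Proof.
move=> mF; have -> : (fun x => (A *m F x) i 0) = (fun x => \sum_j A i j * F x j 0).
  by apply/funext => x; rewrite !mxE.
apply: (@mf_sum _ _ _ _ _ _ (fun j x => A i j * F x j 0)) => j.
exact: measurable_funM (measurable_cst _) (mF j).
Qed.

Lemma m_logits m k (F : X -> 'cV[R]_m) (g : 'I_k -> 'cV[R]_m) y :
  (forall j, measurable_fun setT (fun x => F x j 0)) ->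
  measurable_fun setT (fun x => (logits (F x) g) y 0).
Proof.
move=> mF; have -> : (fun x => (logits (F x) g) y 0) = (fun x => \sum_j F x j 0 * g y j 0).
  by apply/funext => x; rewrite /logits mxE.
apply: (@mf_sum _ _ _ _ _ _ (fun j x => F x j 0 * g y j 0)) => j.
exact: measurable_funM (mF j) (measurable_cst _).
Qed.
End MeasV.

Theorem mainTheorem5 (R : realType) (d : measure_display) (X : measurableType d)
  (P : probability X R) (m k : nat)
  (f f' : X -> 'cV[R]_m) (g g' : 'I_k -> 'cV[R]_m)
  (sigma_min sigma_max : R) :
  (m.+1 <= k)%N ->
  \sum_(y < k) g y = 0 -> \sum_(y < k) g' y = 0 ->
  (forall i : 'I_m, measurable_fun setT (fun x => f x i 0)) ->
  (forall i : 'I_m, measurable_fun setT (fun x => f' x i 0)) ->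
  general_position P f g -> general_position P f' g' ->
  (* sigma_min is the smallest singular value among all tilde L_J of (f,g) *)
  (exists yt J, admissible (m:=m) yt J /\ singular_value (Ltilde g yt J) sigma_min) ->
  (forall yt J s, admissible (m:=m) yt J -> singular_value (Ltilde g yt J) s ->
     sigma_min <= s) ->
  (* sigma_max is the largest singular value among all tilde L_J of (f,g) *)
  (exists yt J, admissible (m:=m) yt J /\ singular_value (Ltilde g yt J) sigma_max) ->
  (forall yt J s, admissible (m:=m) yt J -> singular_value (Ltilde g yt J) s ->
     s <= sigma_max) ->
  let C := Num.sqrt (2 * m%:R / (k%:R - 1)) in
  ((C / sigma_max)%:E * d_logit P f f' g g' <= d_rep P f f' g g')%E /\
  (d_rep P f f' g g' <= (C / sigma_min)%:E * d_logit P f f' g g')%E.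
Proof.
destruct m as [|m].
  move=> _ _ _ _ _ _ _ [yt [J [_ [_ eig0]]]].
  move/eigenvalueP: eig0 => [v _ /negP]; case; apply/eqP/matrixP => i j.
  by case: j.
destruct k as [|k]; first by [].
move=> hk sg sg' mf mf' [gpU _] _ [yt0 [J0 [adm0 [smin0 eig0]]]] hmin
  [yt1 [J1 [adm1 [smax0 _]]]] hmax C.
have n0 : (0 < m.+1)%N by [].
have smin_pos : 0 < sigma_min.
  rewrite lt_neqAle smin0 andbT; apply/eqP => e.
  move/eigenvalueP: eig0 => [v hv nv].
  have uM : (Ltilde g yt0 J0)^T *m Ltilde g yt0 J0 \in unitmx.
    by rewrite unitmx_mul unitmx_tr gpU.
  move: hv; rewrite -e expr2 mul0r scale0r => hv.
  by move/eqP: nv; apply; rewrite -(mulmxK uM v) hv mul0mx.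
have sle : sigma_min <= sigma_max by apply: (hmax yt0 J0) => //; split.
have smax_pos : 0 < sigma_max by apply: lt_le_trans sle.
pose K : R := 2 * (k.+1)%:R * 'C(k.+1.-2, m.+1.-1)%:R.
pose hh := fun (yt : 'I_k.+1) (J : {set 'I_k.+1}) (x : X) =>
  sqnorm (f x - Atilde g g' yt J *m f' x).
pose H := fun x : X => \sum_(yt : 'I_k.+1) \sum_(J : {set 'I_k.+1} | admissible (m:=m.+1) yt J)
  hh yt J x.
pose V := fun x : X => sqnorm (logits (f x) g - logits (f' x) g').
have KV : forall x, K * V x = \sum_(yt : 'I_k.+1) \sum_(J : {set 'I_k.+1} | admissible (m:=m.+1) yt J)
   bf (Ltilde g yt J *m (Ltilde g yt J)^T) (f x - Atilde g g' yt J *m f' x)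
     (f x - Atilde g g' yt J *m f' x).
  move=> x; rewrite /V logit_sqnorm -comb_id //; last exact: sum_vl.
  apply: eq_bigr => yt _; apply: eq_bigr => J hJ; exact: bfw (gpU _ _ hJ).
have hlo : forall x, sigma_min ^+ 2 * H x <= K * V x.
  move=> x; rewrite KV /H big_distrr; apply: ler_sum => yt _.
  rewrite big_distrr; apply: ler_sum => J hJ.
  rewrite /hh sqnorm_nrm2; apply: (sv_lo _ _ n0); first exact: gpU.
    exact: ltW.
  by move=> s hs; exact: hmin hJ hs.
have hhi : forall x, K * V x <= sigma_max ^+ 2 * H x.
  move=> x; rewrite KV /H big_distrr; apply: ler_sum => yt _.
  rewrite big_distrr; apply: ler_sum => J hJ.
  rewrite /hh sqnorm_nrm2; apply: (sv_hi _ _ n0); first exact: gpU.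
  by move=> s hs; exact: hmax hJ hs.
have sq0 : forall n (v : 'cV[R]_n), 0 <= sqnorm v.
  by move=> n v; rewrite sqnorm_nrm2 nrm2_ge0.
have mhh : forall yt J, measurable_fun setT (hh yt J).
  move=> yt J; apply: m_sqnorm => i; apply: m_sub; first exact: mf.
  exact: m_mul.
have hh0 : forall yt J x, 0 <= hh yt J x by move=> *; exact: sq0.
have mH1 : forall yt, measurable_fun setT
    (fun x => \sum_(J : {set 'I_k.+1} | admissible (m:=m.+1) yt J) hh yt J x).
  by move=> yt; apply: (@mf_sum _ _ _ _ _ _ (fun J x => hh yt J x)).
have mH : measurable_fun setT H.
  by apply: (@mf_sum _ _ _ _ _ _ (fun yt x => \sum_(J : {set 'I_k.+1} | admissible (m:=m.+1) yt J) hh yt J x)).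
have mV : measurable_fun setT V.
  by apply: m_sqnorm => y; apply: m_sub; exact: m_logits.
have H0 : forall x, 0 <= H x.
  by move=> x; apply: sumr_ge0 => yt _; apply: sumr_ge0 => J _.
have V0 : forall x, 0 <= V x by move=> x; exact: sq0.
pose c := ((k.+1 * 'C(k.+1.-1, m.+1))%:R)^-1 : R.
have eR : d_rep2 P f f' g g' = (c%:E * \int[P]_x (H x)%:E)%E.
  rewrite /d_rep2; congr (_ * _)%E.
  under eq_bigr => yt _ do
    rewrite (int_sum _ _ _ P _ (fun J => admissible (m:=m.+1) yt J) (hh yt) (mhh yt) (hh0 yt)).
  by rewrite (int_sum _ _ _ P _ xpredT _ mH1) // => yt x; apply: sumr_ge0.
have c0 : 0 <= c by rewrite invr_ge0.
have K0 : 0 <= K by rewrite /K !mulr_ge0.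
have [I1 I2] := int_bounds _ _ _ P _ _ _ _ _ _ mH mV H0 V0 c0 K0 smin_pos smax_pos hlo hhi.
have kpos : (0 < k)%N by move: hk; rewrite !ltnS; apply: leq_trans.
have cK : c * K = C ^+ 2.
  have hb : k%:R * ('C(k.-1, m))%:R = (m.+1)%:R * ('C(k, m.+1))%:R :> R.
    by rewrite -!natrM mul_bin_diag.
  have C'0 : ('C(k, m.+1))%:R != 0 :> R by rewrite pnatr_eq0 -lt0n bin_gt0.
  have k0 : k%:R != 0 :> R by rewrite pnatr_eq0 -lt0n.
  have eB : ('C(k.-1, m))%:R = (m.+1)%:R * ('C(k, m.+1))%:R / k%:R :> R.
    by rewrite -hb mulrC mulKf.
  rewrite /C sqr_sqrtr; last first.
    by rewrite divr_ge0 // ?mulr_ge0 // -natr1 addrK.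
  rewrite /c /K /= eB natrM -natr1 addrK; field.
  by rewrite k0 C'0 natr1 pnatr_eq0.
have C0 : 0 <= C by exact: sqrtr_ge0.
have iV0 : (0 <= \int[P]_x (V x)%:E)%E by apply: integral_ge0 => x _; rewrite lee_fin.
have iR0 : (0 <= d_rep2 P f f' g g')%E.
  by rewrite eR; apply: mule_ge0; [rewrite lee_fin | apply: integral_ge0 => x _; rewrite lee_fin].
split.
  rewrite /d_rep /d_logit /d_logit2 -/V.
  apply: esqrt_ge => //; first by rewrite divr_ge0 // ltW.
  by rewrite eR expr_div_n -cK.
rewrite /d_rep /d_logit /d_logit2 -/V.
apply: esqrt_le => //; first by rewrite divr_ge0 // ltW.
by rewrite eR expr_div_n -cK.
Qed.
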